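(* Let $n \ge 4$ be an even integer, let $m = \frac{n-2}{2}$, and let $G_n$ be the $n$-vertex graph obtained from two disjoint cliques $Q_1, Q_2$, each isomorphic to $K_m$, together with two non-adjacent vertices $u$ and $v$, each adjacent to every vertex of $Q_1 \cup Q_2$ (i.e., $G_n$ is the join of $2K_m$ with $2K_1$). Then $\chi_{DP}(G_n) = \frac{n}{2} + 1$.
   Context: A correspondence assignment $(L,C)$ for a graph $G$ consists of a list $L(v)$ of colors for each vertex $v$ and, for each edge $uv$, a partial matching $C_{uv}$ between $\{u\}\times L(u)$ and $\{v\}\times L(v)$. An $(L,C)$-coloring is a choice $\phi(v)\in L(v)$ for each vertex $v$ such that for every edge $uv$, the pairs $(u,\phi(u))$ and $(v,\phi(v))$ are not matched in $C_{uv}$. $G$ is $k$-correspondence-colorable if it has an $(L,C)$-coloring for every correspondence assignment with all lists of size $k$; the correspondence chromatic number $\chi_{DP}(G)$ is the least such $k$. *)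

(* Defs.v *)
From mathcomp Require Import all_boot all_order.
Set Implicit Arguments. Unset Strict Implicit. Unset Printing Implicit Defensive.

(* The correspondence C_{xy} between
   {x} x L(x) and {y} x L(y) is encoded by M x y c d (color c at x is matched
   with color d at y); M x y and M y x describe the same matching. *)

Definition corr_assignment (T : finType) (e : rel T) (k : nat)
    (L : T -> seq nat) (M : T -> T -> nat -> nat -> bool) : Prop :=
  [/\ (forall x, uniq (L x) /\ size (L x) = k),
      (forall x y c d, M x y c d = M y x d c),
      (forall x y c d, M x y c d -> [/\ e x y, c \in L x & d \in L y])
    & (forall x y c d d', M x y c d -> M x y c d' -> d = d')].

Definition corr_coloring (T : finType) (e : rel T)
    (L : T -> seq nat) (M : T -> T -> nat -> nat -> bool) (phi : T -> nat) : Prop :=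
  (forall x, phi x \in L x) /\ (forall x y, e x y -> ~~ M x y (phi x) (phi y)).

Definition k_corr_colorable (T : finType) (e : rel T) (k : nat) : Prop :=
  forall L M, corr_assignment e k L M -> exists phi, corr_coloring e L M phi.

Definition is_chi_DP (T : finType) (e : rel T) (k : nat) : Prop :=
  k_corr_colorable e k /\ (forall j, j < k -> ~ k_corr_colorable e j).

(* G_n on vertex set 'I_n, with m = (n-2)/2:
   Q1 = {0,...,m-1}, Q2 = {m,...,2m-1}, u = 2m, v = 2m+1. *)
Definition Gn_adj (n : nat) : rel 'I_n := fun i j =>
  let m := (n - 2) %/ 2 in
  (i != j) &&
  [|| (i < m) && (j < m),
      [&& m <= i, i < 2 * m, m <= j & j < 2 * m]
    | (2 * m <= i) != (2 * m <= j)].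

(* Main.v *)
Require Import Defs.
From mathcomp Require Import all_boot all_order zify.
Set Implicit Arguments. Unset Strict Implicit. Unset Printing Implicit Defensive.

Lemma pigeon (k : nat) (s : seq nat) : uniq s -> all (fun c => c < k) s -> size s <= k.
Proof.
move=> us /allP as_; rewrite -(size_iota 0 k); apply: uniq_leq_size => // c /as_ ck.
by rewrite mem_iota.
Qed.

Lemma greedy (T : finType) (e : rel T) k L M (f : T -> nat) (S : T -> seq T) :
  corr_assignment e k L M ->
  (forall x y, e x y -> f x != f y) ->
  (forall x, size (S x) < k) ->
  (forall x y, e x y -> f y < f x -> y \in S x) ->
  exists phi, corr_coloring e L M phi.
Proof.
case=> HL Hsym HM Hun Hf HS HSe.
have step : forall N, exists phi, (forall x, phi x \in L x) /\
   (forall x y, e x y -> f x < N -> f y < N -> ~~ M x y (phi x) (phi y)).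
  elim=> [|N [phi [Hin Hok]]].
    exists (fun x => nth 0 (L x) 0); split=> // x.
    apply: mem_nth; have [_ ->] := HL x; exact: leq_ltn_trans (HS x).
  pose bad x c := has (fun y => e x y && (f y < f x) && M x y c (phi y)) (S x).
  have Hfree : forall x, has (predC (bad x)) (L x).
    move=> x; rewrite has_count.
    have := count_predC (bad x) (L x).
    have [uL sL] := HL x.
    suff : count (bad x) (L x) <= size (S x).
      have := HS x; lia.
    rewrite -size_filter.
    pose w c := nth x (S x) (find (fun y => e x y && (f y < f x) && M x y c (phi y)) (S x)).
    have Hw : forall c, bad x c -> w c \in S x /\ M x (w c) c (phi (w c)).
      move=> c hc; split; first by rewrite mem_nth // -has_find.
      by have /andP[_ ->] := nth_find x hc.
    rewrite -(size_map w); apply: uniq_leq_size.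
      rewrite map_inj_in_uniq ?filter_uniq // => c c'.
      rewrite !mem_filter => /andP[bc _] /andP[bc' _] eqw.
      have [_ h1] := Hw c bc; have [_ h2] := Hw c' bc'.
      rewrite eqw Hsym in h1; rewrite Hsym in h2.
      exact: Hun h1 h2.
    move=> y /mapP[c]; rewrite mem_filter => /andP[bc _] ->.
    by case: (Hw c bc).
  pose col x := nth 0 (filter (predC (bad x)) (L x)) 0.
  have Hcol : forall x, col x \in L x /\ ~~ bad x (col x).
    move=> x; have : col x \in filter (predC (bad x)) (L x).
      by apply: mem_nth; rewrite size_filter -has_count Hfree.
    by rewrite mem_filter => /andP[h1 h2].
  exists (fun x => if f x == N then col x else phi x); split.
    by move=> x; case: ifP => _; [case: (Hcol x)|].
  move=> x y exy; rewrite !ltnS => lx ly.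
  have [fx|nfx] := eqVneq (f x) N; have [fy|nfy] := eqVneq (f y) N.
  - by have := Hf _ _ exy; rewrite fx fy eqxx.
  - 
    have fyN : f y < N by rewrite ltn_neqAle nfy ly.
    apply/negP => Mxy; have [_ /hasP] := Hcol x; apply.
    exists y; first by apply: (HSe _ _ exy); rewrite fx.
    by rewrite exy fx fyN Mxy.
  - 
    have fxN : f x < N by rewrite ltn_neqAle nfx lx.
    apply/negP; rewrite Hsym => Myx; have [_ /hasP] := Hcol y; apply.
    have [eyx _ _] := HM _ _ _ _ Myx.
    exists x; first by apply: (HSe _ _ eyx); rewrite fy.
    by rewrite eyx fy fxN Myx.
  - 
    by apply: Hok; rewrite // ltn_neqAle ?nfx ?nfy.
have [phi [Hin Hok]] := step (\max_(x : T) (f x)).+1.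
exists phi; split=> // x y exy; apply: Hok => //; rewrite ltnS; exact: leq_bigmax.
Qed.

Lemma mono (T : finType) (e : rel T) j k :
  j <= k -> ~ k_corr_colorable e k -> ~ k_corr_colorable e j.
Proof.
move=> jk nk cj; apply: nk => L M [HL Hsym HM Hun].
pose L' x := take j (L x).
pose M' x y c d := [&& M x y c d, c \in L' x & d \in L' y].
have [phi [Hin Hok]] : exists phi, corr_coloring e L' M' phi.
  apply: cj; split.
  - move=> x; have [u s] := HL x; rewrite take_uniq // size_take s.
    by case: ltngtP jk.
  - by move=> x y c d; rewrite /M' Hsym andbCA andbC -andbA.
  - move=> x y c d /and3P[/HM[]]; done.
  - by move=> x y c d d' /and3P[h _ _] /and3P[h' _ _]; exact: Hun h h'.
exists phi; split.
  by move=> x; exact: mem_take (Hin x).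
move=> x y exy; apply/negP => Mxy; have := Hok x y exy.
by rewrite /M' Mxy !Hin.
Qed.

Lemma adjE n (i j : 'I_n) : Gn_adj i j =
  let m := (n - 2) %/ 2 in
  (val i != val j) &&
  [|| (val i < m) && (val j < m),
      [&& m <= val i, val i < 2 * m, m <= val j & val j < 2 * m]
    | (2 * m <= val i) != (2 * m <= val j)].
Proof. by []. Qed.

Theorem theorem3 (n : nat) (hn4 : 4 <= n) (hev : ~~ odd n) :
  is_chi_DP (@Gn_adj n) (n %/ 2 + 1).
Proof.
have [Hn Hk] : n = 2 * ((n-2) %/2) + 2 /\ n %/ 2 = (n-2)%/2 + 1.
  have := modn2 n; rewrite (negbTE hev); lia.
rewrite Hk; set m := (n - 2) %/ 2 in Hn *.
have AE : forall i j : 'I_n, Gn_adj i j =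
  ((i : nat) != j) &&
  [|| (i < m) && (j < m),
      [&& m <= i, i < 2 * m, m <= j & j < 2 * m]
    | (2 * m <= i) != (2 * m <= j)] by [].
have m1 : 1 <= m by lia.
have n0 : 0 < n by lia.
pose q j : 'I_n := insubd (Ordinal n0) j.
have qv : forall j, j < n -> nat_of_ord (q j) = j.
  by move=> j hj; have := val_insubd (Ordinal n0) j; rewrite hj.
have qK : forall y : 'I_n, q (nat_of_ord y) = y by move=> y; apply: val_inj; rewrite /= qv.
split.
  move=> L M HA.
  pose f (i : 'I_n) := if 2 * m <= i then 0 else (nat_of_ord i).+1.
  pose lo (i : nat) := if i < m then 0 else m.
  pose S (i : 'I_n) := if 2 * m <= i then [::] else
     q (2 * m) :: q (2 * m + 1) :: map q (iota (lo i) (i - lo i)).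
  apply: (greedy (f := f) (S := S) HA).
  - move=> x y; rewrite AE /f; case: ifP => ? ; case: ifP => ? /=; lia.
  - move=> x; rewrite /S; case: ifP => hx /=; first lia.
    rewrite size_map size_iota /lo; case: ifP; lia.
  - move=> x y exy fyx; rewrite AE in exy; rewrite /S.
    case: ifP => hx; first by move: fyx; rewrite /f hx ltn0.
    rewrite /f hx in fyx.
    case: (boolP (2 * m <= y)) => hy.
      rewrite !inE -(qK y); have : nat_of_ord y = 2 * m \/ nat_of_ord y = 2 * m + 1.
        have := ltn_ord y; lia.
      by case=> ->; rewrite eqxx ?orbT.
    rewrite (negbTE hy) in fyx.
    rewrite !inE -(qK y) map_f ?orbT // mem_iota /lo; case: ifP; lia.
move=> j0 hj0; apply: (@mono _ _ j0 (m + 1)); first lia.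
pose k := m + 1.
pose succ c := if c == m then 0 else c.+1.
pose inQ2 (i : nat) := (m <= i) && (i < 2 * m).
pose rule (x y : nat) c d := if (x == 2 * m + 1) && inQ2 y then d == succ c
   else if (y == 2 * m + 1) && inQ2 x then c == succ d else c == d.
pose M (x y : 'I_n) c d := [&& Gn_adj x y, c < k, d < k & rule x y c d].
pose L (x : 'I_n) := iota 0 k.
move=> /(_ L M); case.
  split.
  - by move=> x; rewrite iota_uniq size_iota.
  - move=> x y c d; rewrite /M.
    have -> : Gn_adj x y = Gn_adj y x by apply/idP/idP; rewrite !AE; lia.
    have -> : rule x y c d = rule y x d c.
      by rewrite /rule /inQ2 /succ; repeat (case: ifP => ?); try done; lia.
    by case: (c < k); case: (d < k).
  - move=> x y c d /and4P[? ? ? ?]; split => //; rewrite mem_iota; lia.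
  - move=> x y c d d' /and4P[_ _ h1 r1] /and4P[_ _ h2 r2]; move: r1 r2.
    rewrite /rule /succ; by repeat (case: ifP => ?); lia.
move=> phi [Hin Hok].
have Hlt : forall x, phi x < k by move=> x; have := Hin x; rewrite mem_iota.
have Hok' : forall i j, i < n -> j < n -> Gn_adj (q i) (q j) ->
     ~~ rule i j (phi (q i)) (phi (q j)).
  move=> i j hi hj a; have := Hok _ _ a; rewrite /M a !Hlt /= qv // qv //.
have Hadj : forall i j, i < n -> j < n -> i != j ->
   [|| (i < m) && (j < m), [&& m <= i, i < 2 * m, m <= j & j < 2 * m]
    | (2 * m <= i) != (2 * m <= j)] -> Gn_adj (q i) (q j).
  by move=> i j hi hj hij h; rewrite AE /= !qv // hij h.
set a := phi (q (2 * m)); set b := phi (q (2 * m + 1)).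
have [ab|ab] := eqVneq a b.
  pose s := map (fun j => phi (q j)) (iota m m) ++ [:: a; succ a].
  have : size s <= k.
    apply: pigeon.
      rewrite cat_uniq; apply/and3P; split.
      - rewrite map_inj_in_uniq ?iota_uniq // => i i'; rewrite !mem_iota => hi hi'.
        apply: contraPeq => ne.
        have := Hok' i i' ltac:(lia) ltac:(lia) (Hadj i i' ltac:(lia) ltac:(lia) ne ltac:(lia)).
        rewrite /rule /inQ2; repeat (case: ifP => ?); lia.
      - apply/hasPn => c; rewrite !inE => /orP[] /eqP ->.
          apply/mapP => -[i]; rewrite mem_iota => hi ea.
          have := Hok' (2 * m) i ltac:(lia) ltac:(lia) (Hadj (2 * m) i ltac:(lia) ltac:(lia) ltac:(lia) ltac:(lia)).
          rewrite /rule /inQ2 -/a; repeat (case: ifP => ?); lia.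
        apply/mapP => -[i]; rewrite mem_iota => hi ea.
        have := Hok' (2 * m + 1) i ltac:(lia) ltac:(lia) (Hadj (2 * m + 1) i ltac:(lia) ltac:(lia) ltac:(lia) ltac:(lia)).
        move: ea; rewrite /rule /inQ2 -/b -ab /succ; repeat (case: ifP => ?); lia.
      - rewrite /= inE andbT /succ; case: ifP; lia.
    rewrite all_cat /= !Hlt /succ andbT; apply/andP; split.
      by apply/allP => c /mapP[i _ ->].
    have := Hlt (q (2 * m)); rewrite -/a /k /=; case: ifP; lia.
  by rewrite size_cat size_map size_iota /=; lia.
pose s := map (fun j => phi (q j)) (iota 0 m) ++ [:: a; b].
have : size s <= k.
  apply: pigeon.
    rewrite cat_uniq; apply/and3P; split.
    - rewrite map_inj_in_uniq ?iota_uniq // => i i'; rewrite !mem_iota => hi hi'.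
      apply: contraPeq => ne.
      have := Hok' i i' ltac:(lia) ltac:(lia) (Hadj i i' ltac:(lia) ltac:(lia) ne ltac:(lia)).
      rewrite /rule /inQ2; repeat (case: ifP => ?); lia.
    - apply/hasPn => c; rewrite !inE => /orP[] /eqP ->.
        apply/mapP => -[i]; rewrite mem_iota => hi ea.
        have := Hok' (2 * m) i ltac:(lia) ltac:(lia) (Hadj (2 * m) i ltac:(lia) ltac:(lia) ltac:(lia) ltac:(lia)).
        rewrite /rule /inQ2 -/a; repeat (case: ifP => ?); lia.
      apply/mapP => -[i]; rewrite mem_iota => hi ea.
      have := Hok' (2 * m + 1) i ltac:(lia) ltac:(lia) (Hadj (2 * m + 1) i ltac:(lia) ltac:(lia) ltac:(lia) ltac:(lia)).
      rewrite /rule /inQ2 -/b; repeat (case: ifP => ?); lia.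
    - by rewrite /= inE andbT.
  rewrite all_cat /= !Hlt /= andbT; by apply/allP => c /mapP[i _ ->].
by rewrite size_cat size_map size_iota /=; lia.
Qed.
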